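(* Let $\pi_k$ (target policy), $\beta_k$ and $\beta_{k+1}$ (behavioral policies) be stationary policies, let $\pi_{k+1}=\beta_{k+1}$, and let $\mu_k=d^{\beta_k}$. Let $q$ be an estimate of $Q^{\pi_k}$. Assume (i) $\max_{s}d_{TV}\big(\beta_k(\cdot|s),\beta_{k+1}(\cdot|s)\big)\le\delta(1-\gamma)$; (ii) $\varepsilon(\mu_k,q)\le\varepsilon$; and (iii) $|Q^{\pi_k}(s,a)-q(s,a)|\le\frac{1}{1-\gamma}$ for all $(s,a)$. Then $$V^{\pi_{k+1}}(s_0)-V^{\pi_k}(s_0)\;\ge\;\frac{1}{1-\gamma}\left(\mathbb{A}^{\pi_k}_{\pi_{k+1}}-\varepsilon-\frac{2\delta}{1-\gamma}\right).$$
   Context: Finite discounted MDP $(\mathcal{S},\mathcal{A},P,r,\gamma,s_0)$ with rewards in $[0,1]$, $\gamma\in[0,1)$, fixed initial state $s_0$. For a stationary policy $\pi$: $V^\pi,Q^\pi$ are its value and action-value functions and $d^{\pi}(s,a)=(1-\gamma)\sum_{t\ge0}\gamma^t\Pr_\pi(s_t=s,a_t=a)$ its discounted state-action visitation distribution from $s_0$. Weighted action-value error of an estimate $q$ of $Q^{\pi_k}$ on a distribution $\mu$: $\varepsilon(\mu,q)=\sum_{s,a}\mu(s,a)|Q^{\pi_k}(s,a)-q(s,a)|$. Estimated expected advantage: $\mathbb{A}^{\pi_k}_{\pi_{k+1}}=\mathbb{E}_{(s,a)\sim d^{\pi_{k+1}}}[q(s,a)-V^{\pi_k}(s)]$. Total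 variation: $d_{TV}(p,q)=\frac12\sum_x|p(x)-q(x)|$. *)

(* Defs.v *)
From HB Require Import structures.
From mathcomp Require Import all_boot all_order all_algebra.
From mathcomp Require Import all_classical all_reals all_analysis.
Set Implicit Arguments. Unset Strict Implicit. Unset Printing Implicit Defensive.
Import Order.TTheory GRing.Theory Num.Theory.
Local Open Scope ring_scope.

Section MDP.
Variables (R : realType) (S A : finType).

(* transition kernel P s a s' = P(s' | s, a); policy pi s a = pi(a | s) *)
Definition is_dist (T : finType) (p : T -> R) : Prop :=
  (forall x, 0 <= p x) /\ \sum_x p x = 1.

Definition is_kernel (P : S -> A -> S -> R) : Prop :=
  forall s a, is_dist (P s a).

Definition is_policy (pi : S -> A -> R) : Prop :=
  forall s, is_dist (pi s).

Fixpoint state_dist (P : S -> A -> S -> R) (pi : S -> A -> R) (s0 : S)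
    (t : nat) : S -> R :=
  match t with
  | O => fun s => if s == s0 then 1 else 0
  | t'.+1 => fun s' =>
      \sum_s \sum_a state_dist P pi s0 t' s * pi s a * P s a s'
  end.

Definition sa_dist P pi s0 t (s : S) (a : A) : R :=
  state_dist P pi s0 t s * pi s a.

(* infinite sums are limits of partial sums (they converge: finite MDP, gamma < 1) *)
Definition Vf (P : S -> A -> S -> R) (r : S -> A -> R) (gamma : R)
    (pi : S -> A -> R) (s : S) : R :=
  limn (fun n => \sum_(0 <= t < n) (gamma ^+ t * \sum_s' \sum_a sa_dist P pi s t s' a * r s' a)).

Definition Qf P r gamma pi (s : S) (a : A) : R :=
  r s a + gamma * \sum_s' P s a s' * Vf P r gamma pi s'.

Definition dvisit P (gamma : R) pi (s0 : S) (s : S) (a : A) : R :=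
  (1 - gamma) * limn (fun n => \sum_(0 <= t < n) (gamma ^+ t * sa_dist P pi s0 t s a)).

Definition wQerr (Qpi : S -> A -> R) (mu : S -> A -> R) (q : S -> A -> R) : R :=
  \sum_s \sum_a mu s a * `|Qpi s a - q s a|.

Definition est_adv (d : S -> A -> R) (q : S -> A -> R) (V : S -> R) : R :=
  \sum_s \sum_a d s a * (q s a - V s).

Definition dTV (T : finType) (p p' : T -> R) : R :=
  2^-1 * \sum_x `|p x - p' x|.

End MDP.

(* Main.v *)
Require Import Defs.
From HB Require Import structures.
From mathcomp Require Import all_boot all_order all_algebra.
From mathcomp Require Import all_classical all_reals all_analysis.
From mathcomp Require Import ring lra.
Import Order.TTheory GRing.Theory Num.Theory.
Local Open Scope ring_scope.

Lemma le_sum1 {R : realType} {T : finType} (F : T -> R) i :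
  (forall j, 0 <= F j) -> F i <= \sum_j F j.
Proof. by move=> h; rewrite (bigD1 i) //= lerDl sumr_ge0. Qed.

Lemma rho_ge0 {R : realType} {S A : finType} (P : S -> A -> S -> R) pi s0 t s :
  is_kernel P -> is_policy pi -> 0 <= state_dist P pi s0 t s.
Proof.
move=> hP hpi; elim: t s => [|t IH] s /=; first by case: (s == s0).
apply: sumr_ge0 => x _; apply: sumr_ge0 => a _.
by rewrite !mulr_ge0 //; [case: (hpi x) | case: (hP x a)].
Qed.

Lemma rho_sum1 {R : realType} {S A : finType} (P : S -> A -> S -> R) pi s0 t :
  is_kernel P -> is_policy pi -> \sum_s state_dist P pi s0 t s = 1.
Proof.
move=> hP hpi; elim: t => [|t IH] /=.
  by rewrite (bigD1 s0) //= eqxx big1 ?addr0 // => s /negbTE ->.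
rewrite exchange_big /= -{}IH; apply: eq_bigr => s _.
rewrite exchange_big /=.
transitivity (\sum_a state_dist P pi s0 t s * pi s a).
  apply: eq_bigr => a _; rewrite -mulr_sumr.
  by case: (hP s a) => _ ->; rewrite mulr1.
by rewrite -mulr_sumr; case: (hpi s) => _ ->; rewrite mulr1.
Qed.

Lemma rho_le1 {R : realType} {S A : finType} (P : S -> A -> S -> R) pi s0 t s :
  is_kernel P -> is_policy pi -> state_dist P pi s0 t s <= 1.
Proof.
move=> hP hpi; rewrite -(rho_sum1 _ _ s0 t hP hpi).
by apply: le_sum1 => j; apply: rho_ge0.
Qed.

Lemma sa_ge0 {R : realType} {S A : finType} (P : S -> A -> S -> R) pi s0 t s a :
  is_kernel P -> is_policy pi -> 0 <= sa_dist P pi s0 t s a.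
Proof.
move=> hP hpi; rewrite /sa_dist mulr_ge0 ?rho_ge0 //; by case: (hpi s).
Qed.

Lemma sa_sum1 {R : realType} {S A : finType} (P : S -> A -> S -> R) pi s0 t :
  is_kernel P -> is_policy pi -> \sum_s \sum_a sa_dist P pi s0 t s a = 1.
Proof.
move=> hP hpi; rewrite -(rho_sum1 _ _ s0 t hP hpi); apply: eq_bigr => s _.
by rewrite /sa_dist -mulr_sumr; case: (hpi s) => _ ->; rewrite mulr1.
Qed.

Lemma sa_le1 {R : realType} {S A : finType} (P : S -> A -> S -> R) pi s0 t s a :
  is_kernel P -> is_policy pi -> sa_dist P pi s0 t s a <= 1.
Proof.
move=> hP hpi; rewrite -(sa_sum1 _ _ s0 t hP hpi).
apply: le_trans (le_sum1 _ s _); last first.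
  by move=> j; apply: sumr_ge0 => b _; apply: sa_ge0.
by apply: le_sum1 => b; apply: sa_ge0.
Qed.

Lemma geom_id {R : realType} (g : R) n :
  (1 - g) * \sum_(0 <= t < n) g ^+ t = 1 - g ^+ n.
Proof.
elim: n => [|n IH]; first by rewrite big_geq // expr0 mulr0 subrr.
by rewrite big_nat_recr //= mulrDr IH exprS; ring.
Qed.

Lemma geom_le {R : realType} (g : R) n : 0 <= g < 1 ->
  \sum_(0 <= t < n) g ^+ t <= (1 - g)^-1.
Proof.
case/andP=> g0 g1; have c0 : 0 < 1 - g by rewrite subr_gt0.
rewrite -(ler_pM2l c0) geom_id mulfV ?gt_eqF //.
by rewrite lerBlDr lerDl exprn_ge0.
Qed.

Lemma geom2_id {R : realType} (g : R) n :
  (1 - g) ^+ 2 * \sum_(0 <= t < n) g ^+ t * (t.+1)%:R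
   = 1 - (n.+1)%:R * g ^+ n + n%:R * g ^+ n.+1.
Proof.
elim: n => [|n IH]; first by rewrite big_geq // expr0 mulr0 mul0r mulr1; ring.
rewrite big_nat_recr //= mulrDr IH !exprS -!natr1; ring.
Qed.

Lemma geom2_le {R : realType} (g : R) n : 0 <= g < 1 ->
  \sum_(0 <= t < n) g ^+ t * (t.+1)%:R <= (1 - g)^-2.
Proof.
case/andP=> g0 g1; have c0 : 0 < (1 - g) ^+ 2 by rewrite exprn_gt0 // subr_gt0.
rewrite -(ler_pM2l c0) geom2_id mulfV ?gt_eqF //.
rewrite exprS -natr1.
have h : 0 <= g ^+ n * (n%:R * (1 - g) + 1).
  by rewrite mulr_ge0 ?exprn_ge0 // addr_ge0 // mulr_ge0 // subr_ge0 ltW.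
suff : 1 - (n%:R + 1) * g ^+ n + n%:R * (g * g ^+ n) = 1 - g ^+ n * (n%:R * (1 - g) + 1).
  by move=> ->; rewrite lerBlDr lerDl.
ring.
Qed.

Lemma telescope_gen {R : realType} (g : R) (E Rt W : nat -> R) n :
  (forall t, E t = Rt t + g * W t.+1 - W t) ->
  \sum_(0 <= t < n) g ^+ t * E t = \sum_(0 <= t < n) g ^+ t * Rt t + g ^+ n * W n - W 0%N.
Proof.
move=> hE; elim: n => [|n IH]; first by rewrite !big_geq // expr0 mul1r; ring.
by rewrite !big_nat_recr //= IH hE exprS; ring.
Qed.

Lemma step_id {R : realType} {S A : finType} (P : S -> A -> S -> R) (r : S -> A -> R)
   (g : R) (V : S -> R) pi s0 t :
  is_policy pi ->
  \sum_s \sum_a sa_dist P pi s0 t s a * ((r s a + g * \sum_s' P s a s' * V s') - V s)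
  = \sum_s \sum_a sa_dist P pi s0 t s a * r s a
    + g * \sum_s state_dist P pi s0 t.+1 s * V s
    - \sum_s state_dist P pi s0 t s * V s.
Proof.
move=> hpi.
have h1 : \sum_s \sum_a sa_dist P pi s0 t s a * (g * \sum_s' P s a s' * V s')
   = g * \sum_s state_dist P pi s0 t.+1 s * V s.
  transitivity (\sum_s \sum_a \sum_s' g * (state_dist P pi s0 t s * pi s a * P s a s' * V s')).
    apply: eq_bigr => s _; apply: eq_bigr => a _.
    rewrite mulr_sumr mulr_sumr; apply: eq_bigr => s' _; rewrite /sa_dist; ring.
  under eq_bigr do rewrite exchange_big /=.
  rewrite exchange_big /= mulr_sumr; apply: eq_bigr => s' _.
  rewrite mulr_suml mulr_sumr; apply: eq_bigr => s _.
  rewrite mulr_suml mulr_sumr; apply: eq_bigr => a _; ring.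
have h2 : \sum_s \sum_a sa_dist P pi s0 t s a * V s
   = \sum_s state_dist P pi s0 t s * V s.
  apply: eq_bigr => s _; rewrite /sa_dist.
  under eq_bigr do rewrite mulrAC.
  by rewrite -mulr_sumr; case: (hpi s) => _ ->; rewrite mulr1.
rewrite -h1 -h2 -!big_split -sumrB /=; apply: eq_bigr => s _.
rewrite -!big_split -sumrB /=; apply: eq_bigr => a _; ring.
Qed.

Lemma swap_sum {R : realType} {S A : finType} (P : S -> A -> S -> R) (g : R) pi s0 n
  (f : S -> A -> R) :
  \sum_(0 <= t < n) g ^+ t * \sum_s \sum_a sa_dist P pi s0 t s a * f s a
  = \sum_s \sum_a (\sum_(0 <= t < n) g ^+ t * sa_dist P pi s0 t s a) * f s a.
Proof.
under eq_bigr do rewrite mulr_sumr.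
rewrite exchange_big /=; apply: eq_bigr => s _.
under eq_bigr do rewrite mulr_sumr.
rewrite exchange_big /=; apply: eq_bigr => a _.
rewrite mulr_suml; apply: eq_bigr => t _; ring.
Qed.

Lemma sa_diff_step {R : realType} {S A : finType} (P : S -> A -> S -> R) pi pi' s0 t M :
  is_kernel P -> is_policy pi -> is_policy pi' ->
  (forall s, \sum_a `|pi s a - pi' s a| <= M) ->
  \sum_s \sum_a `|sa_dist P pi' s0 t s a - sa_dist P pi s0 t s a|
   <= \sum_s `|state_dist P pi' s0 t s - state_dist P pi s0 t s| + M.
Proof.
move=> hP hpi hpi' hM.
set r' := state_dist P pi' s0 t; set rr := state_dist P pi s0 t.
have -> : M = \sum_s rr s * M.
  by rewrite -mulr_suml rho_sum1 // mul1r.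
rewrite -big_split /=; apply: ler_sum => s _.
apply: (@le_trans _ _ (\sum_a (`|r' s - rr s| * pi' s a + rr s * `|pi s a - pi' s a|))).
  apply: ler_sum => a _; rewrite /sa_dist -/r' -/rr.
  have -> : r' s * pi' s a - rr s * pi s a
     = (r' s - rr s) * pi' s a + rr s * (pi' s a - pi s a) by ring.
  apply: (le_trans (ler_normD _ _)); rewrite !normrM.
  rewrite (ger0_norm (_ : 0 <= pi' s a)); last by case: (hpi' s).
  rewrite (ger0_norm (_ : 0 <= rr s)); last exact: rho_ge0.
  by rewrite (distrC (pi' s a)).
rewrite big_split /= -mulr_sumr -mulr_sumr; case: (hpi' s) => _ ->.
rewrite mulr1 lerD2l ler_wpM2l //; first exact: rho_ge0.
Qed.

Lemma state_diff_step {R : realType} {S A : finType} (P : S -> A -> S -> R) pi pi' s0 t :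
  is_kernel P ->
  \sum_s `|state_dist P pi' s0 t.+1 s - state_dist P pi s0 t.+1 s|
   <= \sum_s \sum_a `|sa_dist P pi' s0 t s a - sa_dist P pi s0 t s a|.
Proof.
move=> hP /=.
apply: (@le_trans _ _ (\sum_s' \sum_s \sum_a
   `|sa_dist P pi' s0 t s a - sa_dist P pi s0 t s a| * P s a s')).
  apply: ler_sum => s' _; rewrite -sumrB.
  apply: (le_trans (ler_norm_sum _ _ _)); apply: ler_sum => s _.
  rewrite -sumrB; apply: (le_trans (ler_norm_sum _ _ _)); apply: ler_sum => a _.
  rewrite /sa_dist -mulrBl normrM (ger0_norm (_ : 0 <= P s a s')) //; by case: (hP s a).
rewrite exchange_big /=; apply: ler_sum => s _.
rewrite exchange_big /=; apply: ler_sum => a _.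
by rewrite -mulr_sumr; case: (hP s a) => _ ->; rewrite mulr1.
Qed.

Lemma state_diff_bound {R : realType} {S A : finType} (P : S -> A -> S -> R) pi pi' s0 t M :
  is_kernel P -> is_policy pi -> is_policy pi' ->
  (forall s, \sum_a `|pi s a - pi' s a| <= M) ->
  \sum_s `|state_dist P pi' s0 t s - state_dist P pi s0 t s| <= t%:R * M.
Proof.
move=> hP hpi hpi' hM; elim: t => [|t IH].
  by rewrite mul0r big1 // => s _ /=; rewrite subrr normr0.
apply: (le_trans (state_diff_step _ _ _ _ _ hP)).
apply: (le_trans (sa_diff_step _ _ _ _ _ _ hP hpi hpi' hM)).
by rewrite -natr1 mulrDl mul1r lerD2r.
Qed.

Lemma sa_diff_bound {R : realType} {S A : finType} (P : S -> A -> S -> R) pi pi' s0 t M :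
  is_kernel P -> is_policy pi -> is_policy pi' ->
  (forall s, \sum_a `|pi s a - pi' s a| <= M) ->
  \sum_s \sum_a `|sa_dist P pi' s0 t s a - sa_dist P pi s0 t s a| <= (t.+1)%:R * M.
Proof.
move=> hP hpi hpi' hM.
apply: (le_trans (sa_diff_step _ _ _ _ _ _ hP hpi hpi' hM)).
by rewrite -natr1 mulrDl mul1r lerD2r; apply: state_diff_bound.
Qed.
Local Open Scope classical_set_scope.
Import numFieldNormedType.Exports.

Lemma cvg_bigsum {R : realType} {I : finType} (f : I -> nat -> R) (l : I -> R) :
  (forall i, f i n @[n --> \oo] --> l i) ->
  (\sum_i f i n) @[n --> \oo] --> \sum_i l i.
Proof.
move=> h; rewrite unlock /=.
elim: (index_enum I) => [|x s IH] /=; first exact: cvg_cst.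
exact: cvgD.
Qed.

Lemma u_mono {R : realType} {S A : finType} (P : S -> A -> S -> R) (g : R) pi s0 s a :
  is_kernel P -> is_policy pi -> 0 <= g ->
  {homo (fun n => \sum_(0 <= t < n) g ^+ t * sa_dist P pi s0 t s a) :
     n m / (n <= m)%N >-> n <= m}.
Proof.
move=> hP hpi g0 n m nm /=.
rewrite (big_cat_nat (leq0n n) nm) /= lerDl sumr_ge0 // => t _.
by rewrite mulr_ge0 ?exprn_ge0 ?sa_ge0.
Qed.

Lemma u_cvg {R : realType} {S A : finType} (P : S -> A -> S -> R) (g : R) pi s0 s a :
  is_kernel P -> is_policy pi -> 0 <= g < 1 ->
  cvgn (fun n => \sum_(0 <= t < n) g ^+ t * sa_dist P pi s0 t s a).
Proof.
move=> hP hpi hg; have /andP[g0 g1] := hg.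
apply: nondecreasing_is_cvgn; first exact: u_mono.
exists (1 - g)^-1 => _ [n _ <-].
apply: le_trans (geom_le g n hg); apply: ler_sum => t _.
by rewrite ler_piMr ?exprn_ge0 ?sa_le1.
Qed.

Lemma u_lim_ge0 {R : realType} {S A : finType} (P : S -> A -> S -> R) (g : R) pi s0 s a :
  is_kernel P -> is_policy pi -> 0 <= g < 1 ->
  0 <= limn (fun n => \sum_(0 <= t < n) g ^+ t * sa_dist P pi s0 t s a).
Proof.
move=> hP hpi hg; have /andP[g0 g1] := hg.
have := nondecreasing_cvgn_le (u_mono P g pi s0 s a hP hpi g0) (u_cvg P g pi s0 s a hP hpi hg) 0.
move=> h; apply: le_trans h; by rewrite big_geq.
Qed.
Local Open Scope classical_set_scope.
Import numFieldNormedType.Exports.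

Theorem theorem2 (R : realType) (S A : finType)
  (P : S -> A -> S -> R) (r : S -> A -> R) (gamma : R) (s0 : S)
  (pi_k beta_k beta_k1 pi_k1 : S -> A -> R) (q : S -> A -> R) (delta eps : R) :
  is_kernel P ->
  (forall s a, 0 <= r s a <= 1) ->
  0 <= gamma < 1 ->
  is_policy pi_k -> is_policy beta_k -> is_policy beta_k1 ->
  pi_k1 = beta_k1 ->
  (forall s, dTV (beta_k s) (beta_k1 s) <= delta * (1 - gamma)) ->
  wQerr (Qf P r gamma pi_k) (dvisit P gamma beta_k s0) q <= eps ->
  (forall s a, `|Qf P r gamma pi_k s a - q s a| <= (1 - gamma)^-1) ->
  Vf P r gamma pi_k1 s0 - Vf P r gamma pi_k s0 >=
    (1 - gamma)^-1 *
      (est_adv (dvisit P gamma pi_k1 s0) q (Vf P r gamma pi_k)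
       - eps - 2 * delta / (1 - gamma)).
Proof.
move=> hP hr hg hpk hbk hbk1 epi hTV hW hQ; subst pi_k1.
have /andP[g0 g1] := hg.
have c0 : 0 < 1 - gamma by rewrite subr_gt0.
set c := 1 - gamma in c0 hTV hQ *.
set ci := c^-1 in hQ *.
have cic : ci * c = 1 by rewrite mulVf ?gt_eqF.
have ci0 : 0 <= ci by rewrite invr_ge0 ltW.
set V := Vf P r gamma pi_k in hQ hW *.
set Q := Qf P r gamma pi_k in hQ hW *.
pose u n s a := \sum_(0 <= t < n) gamma ^+ t * sa_dist P beta_k1 s0 t s a.
pose w n s a := \sum_(0 <= t < n) gamma ^+ t * sa_dist P beta_k s0 t s a.
pose L s a := limn (fun n => u n s a).
pose K s a := limn (fun n => w n s a).
have hu : forall s a, u n s a @[n --> \oo] --> L s a.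
  by move=> s a; apply: u_cvg.
have hw : forall s a, w n s a @[n --> \oo] --> K s a.
  by move=> s a; apply: u_cvg.
have K0 : forall s a, 0 <= K s a by move=> s a; apply: u_lim_ge0.
set M := 2 * delta * c.
have hM : forall s, \sum_a `|beta_k s a - beta_k1 s a| <= M.
  move=> s; have := hTV s; rewrite /dTV /M => h.
  have -> : \sum_a `|beta_k s a - beta_k1 s a| = 2 * (2^-1 * \sum_a `|beta_k s a - beta_k1 s a|).
    by rewrite mulrA mulfV ?mul1r // pnatr_eq0.
  by rewrite -mulrA ler_pM2l.
pose W n := \sum_s state_dist P beta_k1 s0 n s * V s.
have W0 : W 0%N = V s0.
  rewrite /W /= (bigD1 s0) //= eqxx mul1r big1 ?addr0 // => s /negbTE -> ; by rewrite mul0r.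
have hid : forall n, \sum_(0 <= t < n) gamma ^+ t *
      (\sum_s' \sum_a sa_dist P beta_k1 s0 t s' a * r s' a)
    = \sum_s \sum_a u n s a * (Q s a - V s) - gamma ^+ n * W n + V s0.
  move=> n.
  have := @telescope_gen R gamma
    (fun t => \sum_s \sum_a sa_dist P beta_k1 s0 t s a * (Q s a - V s))
    (fun t => \sum_s' \sum_a sa_dist P beta_k1 s0 t s' a * r s' a) W n.
  move=> /(_ (fun t => step_id P r gamma V beta_k1 s0 t hbk1)).
  rewrite swap_sum W0 => ->; ring.
have hB : forall n, `|W n| <= \sum_s `|V s|.
  move=> n; apply: (le_trans (ler_norm_sum _ _ _)); apply: ler_sum => s _.
  rewrite normrM ger0_norm ?rho_ge0 //; apply: ler_piMl => //.
  exact: rho_le1.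
have hgW : gamma ^+ n * W n @[n --> \oo] --> 0.
  set B := \sum_s `|V s|.
  apply: (@squeeze_cvgr _ _ _ _ (fun n => geometric (- B) gamma n) (fun n => geometric B gamma n)).
  - apply: nearW => n /=; rewrite mulNr -ler_norml normrM ger0_norm ?exprn_ge0 //.
    rewrite mulrC ler_wpM2r ?exprn_ge0 //.
  - by apply: cvg_geometric; rewrite ger0_norm.
  - by apply: cvg_geometric; rewrite ger0_norm.
have hV : Vf P r gamma beta_k1 s0 = \sum_s \sum_a L s a * (Q s a - V s) + V s0.
  rewrite /Vf.
  under eq_fun do rewrite hid.
  apply: (cvg_lim (@Rhausdorff R)).
  have -> : \sum_s \sum_a L s a * (Q s a - V s) + V s0
     = \sum_s \sum_a L s a * (Q s a - V s) - 0 + V s0 by rewrite subr0.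
  apply: cvgD; last exact: cvg_cst.
  apply: cvgB; last exact: hgW.
  apply: cvg_bigsum => s; apply: cvg_bigsum => a; apply: cvgMl; exact: hu.
have M0 : 0 <= M by apply: le_trans (hM s0); apply: sumr_ge0 => a _.
have hD : \sum_s \sum_a `|L s a - K s a| <= M * c ^- 2.
  have hcv : (\sum_s \sum_a `|u n s a - w n s a|) @[n --> \oo]
      --> \sum_s \sum_a `|L s a - K s a|.
    apply: cvg_bigsum => s; apply: cvg_bigsum => a; apply: cvg_norm.
    by apply: cvgB; [exact: hu | exact: hw].
  rewrite -(cvg_lim (@Rhausdorff R) hcv).
  apply: limr_le; first exact: (cvgP _ hcv).
  apply: nearW => n.
  apply: (@le_trans _ _ (\sum_s \sum_a \sum_(0 <= t < n) gamma ^+ t *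
      `|sa_dist P beta_k1 s0 t s a - sa_dist P beta_k s0 t s a|)).
    apply: ler_sum => s _; apply: ler_sum => a _.
    rewrite /u /w -sumrB; apply: (le_trans (ler_norm_sum _ _ _)).
    apply: ler_sum => t _.
    by rewrite -mulrBr normrM ger0_norm ?exprn_ge0.
  under eq_bigr do rewrite exchange_big /=.
  rewrite exchange_big /=.
  apply: (@le_trans _ _ (\sum_(0 <= t < n) gamma ^+ t * (t.+1)%:R * M)).
    apply: ler_sum => t _; under eq_bigr do rewrite -mulr_sumr.
    rewrite -mulr_sumr -mulrA ler_wpM2l ?exprn_ge0 //.
    exact: sa_diff_bound.
  rewrite -mulr_suml mulrC ler_wpM2l //; exact: geom2_le.
set X := \sum_s \sum_a L s a * (Q s a - q s a).
set Y := \sum_s \sum_a L s a * (q s a - V s).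
set SK := \sum_s \sum_a K s a * `|Q s a - q s a|.
set SD := \sum_s \sum_a `|L s a - K s a| in hD.
have hVs : Vf P r gamma beta_k1 s0 - V s0 = X + Y.
  rewrite hV addrK /X /Y -big_split; apply: eq_bigr => s _.
  rewrite -big_split; apply: eq_bigr => a _ /=; ring.
have hE : est_adv (dvisit P gamma beta_k1 s0) q V = c * Y.
  rewrite /est_adv /Y mulr_sumr; apply: eq_bigr => s _.
  rewrite mulr_sumr; apply: eq_bigr => a _.
  change (dvisit P gamma beta_k1 s0 s a) with (c * L s a); ring.
have hWq : wQerr Q (dvisit P gamma beta_k s0) q = c * SK.
  rewrite /wQerr /SK mulr_sumr; apply: eq_bigr => s _.
  rewrite mulr_sumr; apply: eq_bigr => a _.
  change (dvisit P gamma beta_k s0 s a) with (c * K s a); ring.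
have hX : - SK - SD * ci <= X.
  rewrite /SK /SD /X -sumrN mulr_suml -sumrB; apply: ler_sum => s _.
  rewrite -sumrN mulr_suml -sumrB; apply: ler_sum => a _.
  set F := Q s a - q s a.
  have e1 : - (K s a * `|F|) <= K s a * F.
    by rewrite -mulrN ler_wpM2l // lerNl -normrN ler_norm.
  have e2 : - (`|L s a - K s a| * ci) <= (L s a - K s a) * F.
    have : - `|(L s a - K s a) * F| <= (L s a - K s a) * F.
      by rewrite lerNl -normrN ler_norm.
    apply: le_trans; rewrite lerN2 normrM ler_wpM2l //; exact: hQ.
  have -> : L s a * F = K s a * F + (L s a - K s a) * F by ring.
  exact: lerD e1 e2.
have h1 : SK <= ci * eps.
  by rewrite -[SK]mul1r -cic -mulrA ler_wpM2l // -hWq.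
have h2 : SD * ci <= 2 * delta * ci * ci.
  rewrite ler_wpM2r //; apply: le_trans hD _.
  rewrite /M -exprVn -/ci expr2.
  have -> : 2 * delta * c * (ci * ci) = 2 * delta * ci * (ci * c) by ring.
  by rewrite cic mulr1.
rewrite hVs hE mulrBr mulrBr mulrA cic mul1r.
lra.
Qed.
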